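(* Let $X$ be a Boolean algebra and $\mu\colon X\to[0,1]_l$ a probability valuation on $X$. Then for every $x\in X$ the lower real $\mu(x)$ is a Dedekind real, i.e. for all rationals $q<r$ one has $q<\mu(x)$ or $\mu(x)\le r$ (constructively).
   Context: Reasoning is constructive (valid in any topos). $[0,1]_l$ denotes the lower reals in $[0,1]$: classically, lower cuts of rationals (downward closed, rounded sets of rationals); $\mu(x)$ being Dedekind means its lower cut is located. A probability valuation on a lattice $X$ is a monotone function $\mu\colon X\to[0,1]_l$ with $\mu(0)=0$, $\mu(1)=1$ and $\mu(x)+\mu(y)=\mu(x\wedge y)+\mu(x\vee y)$. *)

(* Defs.v *)
From Stdlib Require Export QArith.
Set Implicit Arguments.
Open Scope Q_scope.

(* Boolean algebras, stated axiomatically (no decidable equality assumed,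
   so this is valid in any topos). *)
Record BoolAlg := {
  car :> Type;
  bmeet : car -> car -> car;
  bjoin : car -> car -> car;
  bcompl : car -> car;
  bbot : car;
  btop : car;
  meetA : forall x y z, bmeet x (bmeet y z) = bmeet (bmeet x y) z;
  joinA : forall x y z, bjoin x (bjoin y z) = bjoin (bjoin x y) z;
  meetC : forall x y, bmeet x y = bmeet y x;
  joinC : forall x y, bjoin x y = bjoin y x;
  meet_absorb : forall x y, bmeet x (bjoin x y) = x;
  join_absorb : forall x y, bjoin x (bmeet x y) = x;
  meet_distr : forall x y z, bmeet x (bjoin y z) = bjoin (bmeet x y) (bmeet x z);
  meet_top : forall x, bmeet x btop = x;
  join_bot : forall x, bjoin x bbot = x;
  meet_compl : forall x, bmeet x (bcompl x) = bbot;
  join_compl : forall x, bjoin x (bcompl x) = btop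
}.

Arguments bmeet {_}. Arguments bjoin {_}. Arguments bcompl {_}.
Definition ble {X : BoolAlg} (x y : X) : Prop := bmeet x y = x.

Record lreal01 := {
  lcut : Q -> Prop;
  lcut_down : forall q r, q <= r -> lcut r -> lcut q;
  lcut_round : forall q, lcut q -> exists r, q < r /\ lcut r;
  lcut_ge0 : forall q, q < 0 -> lcut q;
  lcut_le1 : forall q, lcut q -> q < 1
}.

Definition lsum (a b : lreal01) (q : Q) : Prop :=
  exists s t, lcut a s /\ lcut b t /\ q < s + t.

Definition prob_valuation {X : BoolAlg} (mu : X -> lreal01) : Prop :=
  (forall x y : X, ble x y -> forall q, lcut (mu x) q -> lcut (mu y) q) /\
  (forall q, lcut (mu (bbot X)) q <-> q < 0) /\
  (forall q, lcut (mu (btop X)) q <-> q < 1) /\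
  (forall x y : X, forall q,
      lsum (mu x) (mu y) q <-> lsum (mu (bmeet x y)) (mu (bjoin x y)) q).

(* A lower real is Dedekind (its cut is located). "a <= r" means every
   element of the cut is < r. *)
Definition dedekind (a : lreal01) : Prop :=
  forall q r : Q, q < r -> lcut a q \/ (forall s, lcut a s -> s < r).

(* Main.v *)
Require Import Defs.
From Stdlib Require Import Lqa.

Theorem lemma6 (X : BoolAlg) (mu : X -> lreal01) (Hmu : prob_valuation mu) :
  forall x : X, dedekind (mu x).
Proof.
  intros x q r Hqr.
  destruct Hmu as [_ [Hbot [Htop Hmod]]].
  assert (Hsum : forall p, lsum (mu x) (mu (bcompl x)) p <-> p < 1).
  { intro p. rewrite Hmod, meet_compl, join_compl. split.
    - intros [s [t [Hs [Ht Hp]]]].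
      apply Hbot in Hs. apply Htop in Ht. lra.
    - intro Hp. exists ((p-1)*(1#4)), ((p+1)*(1#2)). split; [|split].
      + apply Hbot. lra.
      + apply Htop. lra.
      + lra. }
  assert (Hlt : 1 - (r - q) < 1) by lra.
  destruct (proj2 (Hsum (1 - (r - q))) Hlt) as [s [t [Hs [Ht Hst]]]].
  destruct (Qlt_le_dec q s) as [H|H].
  - left. exact (lcut_down (mu x) (Qlt_le_weak _ _ H) Hs).
  - right. intros u Hu.
    destruct (lcut_round (mu x) u Hu) as [u' [Hu' Hu'c]].
    assert (u + t < 1).
    { apply Hsum. exists u', t. split; [exact Hu'c|split; [exact Ht|lra]]. }
    lra.
Qed.
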